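(* Let $G$ be a group with a gliding system and $\mathcal{D}\subset G$. The glide complex $X_{\mathcal{D}}$ is nonpositively curved if and only if $\mathcal{D}$ is regular and satisfies the cube condition.
   Context: Gliding system $(\mathcal{G},\mathcal{I})$ in $G$: $\mathcal{G}\subset G\setminus\{1\}$ closed under inversion (glides), $\mathcal{I}\subset\mathcal{G}\times\mathcal{G}$ (independence) with $(s^{-1},t),(t,s)\in\mathcal{I}$ and $st=ts\ne1$ whenever $(s,t)\in\mathcal{I}$. Pre-cubic set: finite set $S$ of pairwise independent glides, $[S]=\prod_{s\in S}s$; cubic: pre-cubic with $[T_1]\ne[T_2]$ for distinct $T_1,T_2\subset S$. Glide complex $X_G$: cubed complex with one $k$-cube for each equivalence class of based cubes $(A,S)$ ($A\in G$, $S$ cubic of size $k$) under $(A,S)\sim([T]A,(S\setminus T)\cup\{t^{-1}:t\in T\})$, $T\subset S$; vertices of the cube are $[T]A$ ($T\subset S$), faces are cubes of $(A,S')$, $S'\subset S$; 0-skeleton $G$. $X_{\mathcal{D}}$: subcomplex of cubes all of whose vertices lie in $\mathcal{D}$. $\mathcal{D}$ is regular if for every $A\in\mathcal{D}$ every pre-cubic $S$ with $sA\in\mathcal{D}$ ($s\in S$) and $stA\in\mathcal{D}$ (distinct $s,t\in S$) is cubic. $\mathcal{D}$ satisfies the cube condition if for every $A\in\mathcal{D}$ and pairwise independent glides $s_1,s_2,s_3$ with $s_1A,s_2A,s_3A,s_1s_2A,s_1s_3A,s_2s_3A\in\mathcal{D}$ one has $s_1s_2s_3A\in\mathcal{D}$.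 A cubed complex is nonpositively curved if the link of every $0$-cell is a simplicial complex and is a flag complex. *)

(* Defs.v *)
(* an arbitrary (possibly infinite) group given by explicit
   operations, a gliding system on it, and the glide complex X_D described
   combinatorially (based cubes, corners, links). *)
From Stdlib Require Import List.
Import ListNotations.
Set Implicit Arguments.

Section Glide.
Context {G : Type} (mul : G -> G -> G) (one : G) (inv : G -> G).

Definition is_group : Prop :=
  (forall x y z, mul x (mul y z) = mul (mul x y) z) /\
  (forall x, mul one x = x) /\ (forall x, mul x one = x) /\
  (forall x, mul (inv x) x = one) /\ (forall x, mul x (inv x) = one).

Context (glide : G -> Prop) (ind : G -> G -> Prop).

Definition gliding_system : Prop :=
  (forall s, glide s -> s <> one) /\
  (forall s, glide s -> glide (inv s)) /\
  (forall s t, ind s t -> glide s /\ glide t) /\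
  (forall s t, ind s t ->
     ind (inv s) t /\ ind t s /\ mul s t = mul t s /\ mul s t <> one).

(* finite sets of group elements are duplicate-free lists *)
Definition prodl (l : list G) : G := fold_right mul one l.
Definition subl (T S : list G) : Prop := NoDup T /\ incl T S.
Definition same_set (S S' : list G) : Prop := forall x, In x S <-> In x S'.

Definition precubic (S : list G) : Prop :=
  NoDup S /\ (forall s, In s S -> glide s) /\
  (forall s t, In s S -> In t S -> s <> t -> ind s t).

Definition cubic (S : list G) : Prop :=
  precubic S /\
  forall T1 T2, subl T1 S -> subl T2 S -> prodl T1 = prodl T2 -> same_set T1 T2.

Definition flipped (S U S' : list G) : Prop :=
  NoDup S' /\
  forall x, In x S' <-> ((In x S /\ ~ In x U) \/ (exists u, In u U /\ x = inv u)).

Variable D : G -> Prop.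

(* the based cube (A,S) gives a cube of X_D: S cubic, all vertices [T]A in D *)
Definition in_XD (A : G) (S : list G) : Prop :=
  cubic S /\ forall T, subl T S -> D (mul (prodl T) A).

(* A corner of a cube: based cube (B,S) together with the vertex position T ⊂ S
   (the vertex [T]B). *)
Record corner := Corner { cbase : G; cset : list G; cpos : list G }.

Definition corner_at (A : G) (c : corner) : Prop :=
  in_XD (cbase c) (cset c) /\ subl (cpos c) (cset c) /\
  mul (prodl (cpos c)) (cbase c) = A.

(* Identification of corners induced by the equivalence of based cubes
   (B,S) ~ ([U]B, (S\U) ∪ U^-1): the vertex [T]B has new position
   (T\U) ∪ {u^-1 : u ∈ U\T}. *)
Definition corner_equiv (c c' : corner) : Prop :=
  exists U, subl U (cset c) /\
    cbase c' = mul (prodl U) (cbase c) /\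
    flipped (cset c) U (cset c') /\
    NoDup (cpos c') /\
    forall x, In x (cpos c') <->
      ((In x (cpos c) /\ ~ In x U) \/
       (exists u, In u U /\ ~ In u (cpos c) /\ x = inv u)).

(* f is the corner, at the same vertex, of the face of c spanned by R ⊂ cset c,
   namely the based cube ([cpos c \ R] (cbase c), R) at position cpos c ∩ R. *)
Definition face_corner (c : corner) (R : list G) (f : corner) : Prop :=
  subl R (cset c) /\ NoDup (cset f) /\ same_set (cset f) R /\
  NoDup (cpos f) /\ (forall x, In x (cpos f) <-> In x (cpos c) /\ In x R) /\
  exists W, NoDup W /\ (forall x, In x W <-> In x (cpos c) /\ ~ In x R) /\
    cbase f = mul (prodl W) (cbase c).

(* Link of the vertex A in X_D: simplices are corners at A of cubes of
   positive dimension (a corner of a k-cube is a (k-1)-simplex); vertices are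
   corners of edges; the vertices of a simplex are the corners of its edges. *)
Definition link_simplex (A : G) (c : corner) : Prop :=
  corner_at A c /\ cset c <> [].
Definition link_vertex (A : G) (v : corner) : Prop :=
  corner_at A v /\ length (cset v) = 1.
Definition vertex_of (c v : corner) : Prop :=
  exists s, In s (cset c) /\ face_corner c [s] v.

(* The link at A is a simplicial complex: each simplex has pairwise distinct
   vertices, and a simplex is determined by its vertex set. *)
Definition link_simplicial (A : G) : Prop :=
  (forall c s1 s2 v1 v2, link_simplex A c -> In s1 (cset c) -> In s2 (cset c) ->
     face_corner c [s1] v1 -> face_corner c [s2] v2 -> corner_equiv v1 v2 ->
     s1 = s2) /\
  (forall c1 c2, link_simplex A c1 -> link_simplex A c2 ->
     (forall v, vertex_of c1 v -> exists v', vertex_of c2 v' /\ corner_equiv v v') ->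
     (forall v, vertex_of c2 v -> exists v', vertex_of c1 v' /\ corner_equiv v v') ->
     corner_equiv c1 c2).

Definition link_flag (A : G) : Prop :=
  forall V : list corner, V <> [] ->
    (forall v, In v V -> link_vertex A v) ->
    (forall v1 v2, In v1 V -> In v2 V -> ~ corner_equiv v1 v2 ->
       exists e w1 w2, link_simplex A e /\ length (cset e) = 2 /\
         vertex_of e w1 /\ vertex_of e w2 /\
         corner_equiv v1 w1 /\ corner_equiv v2 w2) ->
    exists c, link_simplex A c /\
      (forall v, In v V -> exists w, vertex_of c w /\ corner_equiv v w) /\
      (forall w, vertex_of c w -> exists v, In v V /\ corner_equiv v w).

(* 0-cells of X_D are the elements of D *)
Definition nonpositively_curved : Prop :=
  forall A, D A -> link_simplicial A /\ link_flag A.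

Definition regular : Prop :=
  forall A, D A -> forall S, precubic S ->
    (forall s, In s S -> D (mul s A)) ->
    (forall s t, In s S -> In t S -> s <> t -> D (mul s (mul t A))) ->
    cubic S.

Definition cube_condition : Prop :=
  forall A s1 s2 s3, D A ->
    glide s1 -> glide s2 -> glide s3 ->
    ind s1 s2 -> ind s1 s3 -> ind s2 s3 ->
    D (mul s1 A) -> D (mul s2 A) -> D (mul s3 A) ->
    D (mul s1 (mul s2 A)) -> D (mul s1 (mul s3 A)) -> D (mul s2 (mul s3 A)) ->
    D (mul s1 (mul s2 (mul s3 A))).

End Glide.

(* Main.v *)
Require Import Defs.
From Stdlib Require Import List Permutation ClassicalEpsilon Classical Lia.
Import ListNotations.

Definition dec (P : Prop) : bool := if excluded_middle_informative P then true else false.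
Lemma decP (P : Prop) : dec P = true <-> P.
Proof. unfold dec; destruct (excluded_middle_informative P); split; intros; auto; discriminate. Qed.
Lemma decF (P : Prop) : dec P = false <-> ~ P.
Proof. unfold dec; destruct (excluded_middle_informative P); split; intros; auto; try discriminate; contradiction. Qed.

Lemma perm_filter {A} (f : A -> bool) l :
  Permutation l (filter f l ++ filter (fun x => negb (f x)) l).
Proof.
  induction l as [|a l IH]; simpl; auto.
  destruct (f a); simpl; auto.
  apply Permutation_cons_app; auto.
Qed.

Lemma nodup_single {A} (l : list A) s : NoDup l -> (forall x, In x l <-> x = s) -> l = [s].
Proof.
  intros Hn H. destruct l as [|a l].
  - exfalso. apply (proj2 (H s)); auto.
  - assert (a = s) by (apply H; simpl; auto). subst.
    destruct l as [|b l]; auto. exfalso.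
    assert (b = s) by (apply H; simpl; auto). subst.
    inversion Hn; subst. apply H2; simpl; auto.
Qed.

Lemma nil_of {A} (l : list A) : (forall x, ~ In x l) -> l = [].
Proof. destruct l; auto. intros H; exfalso; apply (H a); simpl; auto. Qed.

Lemma subl_single {A} (U : list A) s : NoDup U -> incl U [s] -> U = [] \/ U = [s].
Proof.
  intros Hn Hi. destruct U as [|a U]; auto. right.
  apply nodup_single; auto. intros x; split; intros Hx.
  - apply Hi in Hx. destruct Hx; auto. contradiction.
  - subst. assert (In a [s]) by (apply Hi; simpl; auto). destruct H; subst; simpl; auto. contradiction.
Qed.

Section G.
Context {G : Type} (mul : G -> G -> G) (one : G) (inv : G -> G).
Context (HG : is_group mul one inv).
Context (glide : G -> Prop) (ind : G -> G -> Prop).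
Context (HGS : gliding_system mul one inv glide ind).

Local Notation pr := (prodl mul one).

Lemma massoc x y z : mul x (mul y z) = mul (mul x y) z. Proof. apply HG. Qed.
Lemma one_l x : mul one x = x. Proof. apply HG. Qed.
Lemma one_r x : mul x one = x. Proof. apply HG. Qed.
Lemma inv_l x : mul (inv x) x = one. Proof. apply HG. Qed.
Lemma inv_r x : mul x (inv x) = one. Proof. apply HG. Qed.

Lemma cancel_l a x y : mul a x = mul a y -> x = y.
Proof.
  intros H. rewrite <- (one_l x), <- (one_l y), <- (inv_l a), <- !massoc, H. auto.
Qed.
Lemma inv_inv x : inv (inv x) = x.
Proof. apply (cancel_l (inv x)). rewrite inv_r, inv_l. auto. Qed.
Lemma inv_inj x y : inv x = inv y -> x = y.
Proof. intros H. rewrite <- (inv_inv x), H, inv_inv. auto. Qed.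
Lemma inv_mul_l a x : mul (inv a) (mul a x) = x.
Proof. rewrite massoc, inv_l, one_l. auto. Qed.
Lemma mul_inv_l a x : mul a (mul (inv a) x) = x.
Proof. rewrite massoc, inv_r, one_l. auto. Qed.

Lemma glide_ne1 s : glide s -> s <> one. Proof. apply HGS. Qed.
Lemma glide_inv s : glide s -> glide (inv s). Proof. apply HGS. Qed.
Lemma ind_glide s t : ind s t -> glide s /\ glide t. Proof. apply HGS. Qed.
Lemma ind_sym s t : ind s t -> ind t s. Proof. apply HGS. Qed.
Lemma ind_invl s t : ind s t -> ind (inv s) t. Proof. apply HGS. Qed.
Lemma ind_invr s t : ind s t -> ind s (inv t).
Proof. intros H. apply ind_sym, ind_invl, ind_sym, H. Qed.
Lemma ind_comm s t : ind s t -> mul s t = mul t s. Proof. apply HGS. Qed.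
Lemma ind_ne1 s t : ind s t -> mul s t <> one. Proof. apply HGS. Qed.
Lemma ind_neq s t : ind s t -> s <> t.
Proof. intros H E; subst. apply (ind_ne1 _ _ (ind_invl _ _ H)). apply inv_l. Qed.

Lemma prodl_app l1 l2 : pr (l1 ++ l2) = mul (pr l1) (pr l2).
Proof. induction l1; simpl. rewrite one_l; auto. rewrite IHl1, massoc; auto. Qed.

Lemma prodl_cons_act x l A : mul (pr (x :: l)) A = mul x (mul (pr l) A).
Proof. simpl. rewrite massoc; auto. Qed.

Definition comm_on (C : list G) := forall x y, In x C -> In y C -> mul x y = mul y x.

Lemma comm_on_incl C C' : incl C' C -> comm_on C -> comm_on C'.
Proof. intros Hi H x y Hx Hy. apply H; auto. Qed.

Lemma prodl_perm l1 l2 : Permutation l1 l2 -> comm_on l1 -> pr l1 = pr l2.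
Proof.
  induction 1; intros Hc; simpl; auto.
  - f_equal. apply IHPermutation. intros a b Ha Hb. apply Hc; simpl; auto.
  - rewrite !massoc. rewrite (Hc y x); simpl; auto.
  - rewrite IHPermutation1; auto. apply IHPermutation2.
    intros a b Ha Hb. apply Hc; apply Permutation_in with l'; auto; apply Permutation_sym; auto.
Qed.

Lemma comm_prod a l : (forall y, In y l -> mul a y = mul y a) -> mul a (pr l) = mul (pr l) a.
Proof.
  induction l; intros H; simpl. rewrite one_l, one_r; auto.
  rewrite massoc, H by (simpl; auto). rewrite <- massoc, IHl by (intros; apply H; simpl; auto).
  rewrite massoc; auto.
Qed.

Lemma prodl_inv_cancel l : comm_on (l ++ map inv l) -> mul (pr (map inv l)) (pr l) = one.
Proof.
  induction l as [|a l IH]; intros Hc; simpl. apply one_l.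
  assert (Hc' : comm_on (l ++ map inv l)).
  { apply (comm_on_incl ((a :: l) ++ map inv (a :: l))); auto. intros x Hx. simpl. apply in_app_or in Hx.
    destruct Hx; [right; apply in_or_app; auto| right; apply in_or_app; right; simpl; auto]. }
  rewrite <- massoc.
  rewrite (massoc (pr (map inv l)) a (pr l)).
  rewrite <- (comm_prod a (map inv l)).
  - rewrite <- massoc, IH by auto. rewrite one_r. apply inv_l.
  - intros y Hy. apply Hc; simpl; auto. right; apply in_or_app; right; simpl; auto.
Qed.



Local Notation precubic := (precubic glide ind).

Lemma inC_cases S x : In x (S ++ map inv S) -> exists s, In s S /\ (x = s \/ x = inv s).
Proof.
  intros H. apply in_app_or in H. destruct H as [H|H].
  - exists x; auto.
  - apply in_map_iff in H. destruct H as [s [E H]]. exists s; auto.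
Qed.

Lemma comm_C S : precubic S -> comm_on (S ++ map inv S).
Proof.
  intros [Hn [Hg Hi]] x y Hx Hy.
  apply inC_cases in Hx as [s [Hs Ex]]. apply inC_cases in Hy as [t [Ht Ey]].
  destruct (classic (s = t)) as [E|E].
  - subst t. destruct Ex, Ey; subst; auto; rewrite ?inv_l, ?inv_r; auto.
  - specialize (Hi _ _ Hs Ht E).
    destruct Ex, Ey; subst; apply ind_comm; auto using ind_invl, ind_invr.
Qed.

Lemma comm_sub S l : precubic S -> incl l (S ++ map inv S) -> comm_on l.
Proof. intros H Hi. apply (comm_on_incl _ _ Hi), comm_C, H. Qed.

Lemma invol S s : precubic S -> In s S -> In (inv s) S -> inv s = s.
Proof.
  intros [Hn [Hg Hi]] Hs Hs'. apply NNPP. intros E.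
  apply (ind_ne1 _ _ (Hi _ _ Hs Hs' (fun e => E (eq_sym e)))). apply inv_r.
Qed.

Lemma inC_l S x : In x S -> In x (S ++ map inv S).
Proof. intros; apply in_or_app; auto. Qed.
Lemma inC_r S x : In x S -> In (inv x) (S ++ map inv S).
Proof. intros; apply in_or_app; right; apply in_map; auto. Qed.

Lemma flipped_inC S U S' : incl U S -> flipped inv S U S' -> incl S' (S ++ map inv S).
Proof.
  intros Hu [_ H] x Hx. apply H in Hx. destruct Hx as [[Hx _]|[u [Hu' E]]]; subst.
  apply inC_l; auto. apply inC_r; auto.
Qed.

Definition psi S U V := filter (fun x => dec ((In x V /\ ~ In x U) \/ (In x U /\ ~ In (inv x) V))) S.

Lemma psi_In S U V x : In x (psi S U V) <-> In x S /\ ((In x V /\ ~ In x U) \/ (In x U /\ ~ In (inv x) V)).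
Proof. unfold psi. rewrite filter_In, decP. tauto. Qed.

Lemma CL S U S' V : precubic S -> subl U S -> flipped inv S U S' -> subl V S' ->
  pr (psi S U V) = mul (pr V) (pr U).
Proof.
  intros HS [HUn HUi] HF [HVn HVi].
  assert (HS' := flipped_inC _ _ _ HUi HF).
  destruct HF as [HF1 HF].
  set (U1 := filter (fun u => dec (In (inv u) V)) U).
  set (U2 := filter (fun u => negb (dec (In (inv u) V))) U).
  set (Va := filter (fun x => dec (In x S /\ ~ In x U)) V).
  set (Vb := filter (fun x => negb (dec (In x S /\ ~ In x U))) V).
  assert (P1 : Permutation V (Va ++ Vb)) by apply perm_filter.
  assert (P2 : Permutation U (U1 ++ U2)) by apply perm_filter.
  assert (HSn : NoDup S) by apply HS.
  assert (P3 : Permutation Vb (map inv U1)).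
  { apply NoDup_Permutation.
    - apply NoDup_filter; auto.
    - apply FinFun.Injective_map_NoDup. intros a b; apply inv_inj. apply NoDup_filter; auto.
    - intros x. unfold Vb, U1. rewrite filter_In, in_map_iff. split.
      + intros [Hx Hb]. apply Bool.negb_true_iff, decF in Hb.
        assert (Hx' := Hx). apply HVi, HF in Hx'. destruct Hx' as [Hx'|[u [Hu E]]]. contradiction.
        exists u. split; auto. rewrite filter_In, decP. rewrite <- E. auto.
      + intros [u [E Hu]]. rewrite filter_In, decP in Hu. destruct Hu as [Hu Hv]. subst x.
        split; auto. apply Bool.negb_true_iff, decF. intros [Hs Hn].
        apply Hn. rewrite (invol S u HS); auto. }
  assert (P4 : Permutation (psi S U V) (Va ++ U2)).
  { apply NoDup_Permutation.
    - apply NoDup_filter; auto.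
    - apply NoDup_app; try apply NoDup_filter; auto.
      intros a Ha Hb. unfold Va, U2 in *. rewrite filter_In, decP in Ha. rewrite filter_In in Hb. tauto.
    - intros x. rewrite psi_In, in_app_iff. unfold Va, U2. rewrite !filter_In, decP, Bool.negb_true_iff, decF.
      split.
      + intros [Hx [[H1 H2]|[H1 H2]]]; auto.
      + intros [[H1 [H2 H3]]|[H1 H2]]; split; auto. }
  assert (HcV : comm_on V) by (apply (comm_sub S); auto; intros x Hx; apply HS', HVi, Hx).
  assert (HcU : comm_on U) by (apply (comm_sub S); auto; intros x Hx; apply inC_l, HUi, Hx).
  rewrite (prodl_perm _ _ P1 HcV), (prodl_perm _ _ P2 HcU), (prodl_perm _ _ P4).
  2: { apply (comm_sub S); auto. intros x Hx.
       apply psi_In in Hx. apply inC_l; tauto. }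
  rewrite !prodl_app.
  rewrite (prodl_perm Vb (map inv U1) P3).
  2: { apply (comm_on_incl V); auto. intros x Hx. unfold Vb in Hx. rewrite filter_In in Hx. tauto. }
  rewrite <- !massoc. f_equal.
  rewrite (massoc (pr (map inv U1))). rewrite prodl_inv_cancel, one_l; auto.
  apply (comm_sub S); auto. intros x Hx. apply in_app_or in Hx. destruct Hx as [Hx|Hx].
  - apply inC_l, HUi. unfold U1 in Hx; rewrite filter_In in Hx; tauto.
  - apply in_map_iff in Hx as [u [E Hu]]. subst. apply inC_r, HUi. unfold U1 in Hu; rewrite filter_In in Hu; tauto.
Qed.


Context (D : G -> Prop).
Local Notation XD := (in_XD mul one glide ind D).
Local Notation cubic := (cubic mul one glide ind).

Lemma psi_sub S U V : NoDup S -> subl (psi S U V) S.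
Proof. intros H. split. apply NoDup_filter; auto. intros x Hx; apply psi_In in Hx; tauto. Qed.

Lemma psi_recover S U S' T1 T2 : precubic S -> incl U S -> flipped inv S U S' -> incl T1 S' ->
  same_set (psi S U T1) (psi S U T2) -> incl T1 T2.
Proof.
  intros HS HU [_ HF] HT Hs x Hx. assert (Hx' := HT x Hx). apply HF in Hx'.
  destruct Hx' as [[H1 H2]|[u [Hu E]]].
  - assert (In x (psi S U T2)) by (apply Hs, psi_In; auto). apply psi_In in H. tauto.
  - subst x. assert (~ In u (psi S U T2)).
    { intros H. apply Hs, psi_In in H. destruct H as [_ [[_ H]|[_ H]]]; contradiction. }
    apply NNPP. intros H'. apply H, psi_In. split; auto.
Qed.

Lemma flipped_cases S U S' x : precubic S -> incl U S -> flipped inv S U S' -> In x S' ->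
  (In x S /\ ~ In x U) \/ (exists u, In u U /\ x = inv u /\ ~ (In x S /\ ~ In x U)).
Proof.
  intros HS HU [_ HF] Hx. apply HF in Hx. destruct Hx as [H|[u [Hu E]]]; auto.
  right. exists u; repeat split; auto. intros [H1 H2]. apply H2. subst x.
  rewrite (invol S u HS); auto.
Qed.

Lemma FL B S U S' : XD B S -> subl U S -> flipped inv S U S' -> XD (mul (pr U) B) S'.
Proof.
  intros [[HP HC] HV] [HUn HUi] HF.
  assert (HSn : NoDup S) by apply HP.
  assert (HPr : precubic S') .
  { split; [apply HF|split].
    - intros x Hx. destruct (flipped_cases S U S' x HP HUi HF Hx) as [[H _]|[u [Hu [E _]]]].
      apply HP; auto. subst; apply glide_inv, HP, HUi, Hu.
    - intros x y Hx Hy Hxy.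
      assert (Hi := proj2 (proj2 HP)).
      destruct (flipped_cases S U S' x HP HUi HF Hx) as [[H1 H2]|[u [Hu [E _]]]];
      destruct (flipped_cases S U S' y HP HUi HF Hy) as [[H3 H4]|[w [Hw [E' _]]]]; subst.
      + apply Hi; auto.
      + apply ind_invr, Hi; auto. intros e; subst; contradiction.
      + apply ind_invl, Hi; auto. intros e; subst; contradiction.
      + apply ind_invl, ind_invr, Hi; auto. intros e; subst; contradiction. }
  split; [split|].
  - exact HPr.
  - intros T1 T2 H1 H2 E.
    assert (E' : pr (psi S U T1) = pr (psi S U T2)).
    { rewrite (CL S U S' T1), (CL S U S' T2), E; auto; split; auto. }
    apply HC in E'; try apply psi_sub; auto.
    assert (E'' : same_set (psi S U T2) (psi S U T1)) by (intros x; specialize (E' x); tauto).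
    intros x; split; intros Hx.
    + apply (psi_recover S U S' T1 T2); auto. apply H1.
    + apply (psi_recover S U S' T2 T1); auto. apply H2.
  - intros T HT. rewrite massoc, <- (CL S U S' T); auto. apply HV, psi_sub; auto. split; auto.
Qed.


Local Notation ceq := (corner_equiv mul one inv).

Lemma Trans c c' c'' : precubic (cset c) -> incl (cpos c) (cset c) ->
  ceq c c' -> ceq c' c'' -> ceq c c''.
Proof.
  destruct c as [B S P], c' as [B' S' P'], c'' as [B'' S'' P'']; simpl.
  intros HS HP [U [HU [EB [HF1 [HPn1 HP1]]]]] [V [HV [EB' [HF2 [HPn2 HP2]]]]].
  simpl in *. exists (psi S U V). simpl.
  assert (HSn : NoDup S) by apply HS.
  split; [apply psi_sub; auto|]. split.
  { rewrite EB', EB, massoc, (CL S U S' V); auto. }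
  destruct HF1 as [HN1 HF1], HF2 as [HN2 HF2].
  assert (HVi : incl V S') by apply HV.
  assert (HUi : incl U S) by apply HU.
  split; [split; auto|split; auto].
  - intros x. rewrite HF2. split.
    + intros [[Hx HxV]|[v [Hv E]]].
      * apply HF1 in Hx. destruct Hx as [[Hx HxU]|[u [Hu E]]].
        -- left. split; auto. intros Hw. apply psi_In in Hw. tauto.
        -- right. exists u. split; auto. apply psi_In. subst x. split; auto.
      * subst x. assert (Hv' := HVi v Hv). apply HF1 in Hv'. destruct Hv' as [[Hv1 Hv2]|[u [Hu E]]].
        -- right. exists v; split; auto. apply psi_In; auto.
        -- subst v. rewrite inv_inv. left. split; auto. intros Hw. apply psi_In in Hw.
           destruct Hw as [_ [[_ H]|[_ H]]]; contradiction.
    + intros [[Hx Hw]|[w [Hw E]]].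
      * destruct (classic (In x U)) as [HxU|HxU].
        -- right. exists (inv x). rewrite inv_inv. split; auto.
           apply NNPP. intros H. apply Hw, psi_In. auto.
        -- left. split. apply HF1; auto. intros H. apply Hw, psi_In. auto.
      * subst x. apply psi_In in Hw. destruct Hw as [HwS [[H1 H2]|[H1 H2]]].
        -- right. exists w; auto.
        -- left. split; auto. apply HF1. right. exists w; auto.
  - intros x. rewrite HP2. split.
    + intros [[Hx HxV]|[v [Hv [HvP E]]]].
      * apply HP1 in Hx. destruct Hx as [[Hx HxU]|[u [Hu [HuP E]]]].
        -- left. split; auto. intros Hw. apply psi_In in Hw. tauto.
        -- right. exists u. split; [|split]; auto. apply psi_In. subst x. split; auto.
      * subst x. assert (Hv' := HVi v Hv). apply HF1 in Hv'. destruct Hv' as [[Hv1 Hv2]|[u [Hu E]]].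
        -- right. exists v; split; [apply psi_In; auto|split; auto].
           intros H. apply HvP, HP1. auto.
        -- subst v. rewrite inv_inv. left. split.
           ++ apply NNPP. intros H. apply HvP, HP1. right. exists u. auto.
           ++ intros Hw. apply psi_In in Hw. destruct Hw as [_ [[_ H]|[_ H]]]; contradiction.
    + intros [[Hx Hw]|[w [Hw [HwP E]]]].
      * assert (HxS := HP x Hx). destruct (classic (In x U)) as [HxU|HxU].
        -- right. exists (inv x). rewrite inv_inv. split; [|split]; auto.
           ++ apply NNPP. intros H. apply Hw, psi_In. auto.
           ++ intros H. apply HP1 in H. destruct H as [[H1 H2]|[u [Hu [HuP E]]]].
              ** apply H2. rewrite (invol S x HS); auto.
              ** apply inv_inj in E. subst. contradiction.
        -- left. split. apply HP1; auto. intros H. apply Hw, psi_In. auto.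
      * subst x. apply psi_In in Hw. destruct Hw as [HwS [[H1 H2]|[H1 H2]]].
        -- right. exists w; split; auto; split; auto.
           intros H. apply HP1 in H. destruct H as [[H3 H4]|[u [Hu [HuP E]]]]. contradiction.
           apply H2. rewrite E. rewrite (invol S u HS); auto.
           rewrite <- E; auto.
        -- left. split; auto. apply HP1. right. exists w; auto.
Qed.


Local Notation cat := (corner_at mul one glide ind D).

Definition Enf S T := filter (fun x => dec (~ In x T)) S ++ map inv T.
Definition cdir T s x := (In s T /\ x = inv s) \/ (~ In s T /\ x = s).

Lemma Enf_In S T x : In x (Enf S T) <-> (In x S /\ ~ In x T) \/ (exists u, In u T /\ x = inv u).
Proof.
  unfold Enf. rewrite in_app_iff, filter_In, decP, in_map_iff.
  split; intros [H|[u [E H]]]; eauto.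
Qed.



Lemma Enf_cdir S T x : incl T S -> (In x (Enf S T) <-> exists s, In s S /\ cdir T s x).
Proof.
  intros HT. rewrite Enf_In. unfold cdir. split.
  - intros [[H1 H2]|[u [Hu E]]]; eauto. exists u; split; auto.
  - intros [s [Hs [[H1 H2]|[H1 H2]]]]; subst; eauto.
Qed.

Lemma Enf_flipped S T : precubic S -> subl T S -> flipped inv S T (Enf S T).
Proof.
  intros HS [HTn HTi]. split.
  - apply NoDup_app. apply NoDup_filter, HS.
    apply FinFun.Injective_map_NoDup; auto. intros a b; apply inv_inj.
    intros a Ha Hb. rewrite filter_In, decP in Ha. apply in_map_iff in Hb as [t [E Ht]].
    subst. apply (proj2 Ha). rewrite (invol S t HS); auto. tauto.
  - intros x. apply Enf_In.
Qed.

Lemma cat_parts A c : cat A c -> XD (cbase c) (cset c) /\ subl (cpos c) (cset c) /\ mul (pr (cpos c)) (cbase c) = A.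
Proof. auto. Qed.

Lemma nf_XD A c : cat A c -> XD A (Enf (cset c) (cpos c)).
Proof.
  intros [HX [HT E]]. rewrite <- E. apply (FL _ (cset c)); auto. apply Enf_flipped; auto. apply HX.
Qed.

Lemma c_to_nf A c : cat A c -> ceq c (Corner A (Enf (cset c) (cpos c)) []).
Proof.
  intros [HX [HT E]]. exists (cpos c). simpl. split; auto. split; auto.
  split. apply Enf_flipped; auto. apply HX. split. constructor.
  intros x; split; [intros []|]. intros [[H1 H2]|[u [H1 [H2 _]]]]; contradiction.
Qed.

Lemma nf_to_c A c : cat A c -> ceq (Corner A (Enf (cset c) (cpos c)) []) c.
Proof.
  destruct c as [B S T]. intros [HX [[HTn HTi] E]]. simpl in *.
  assert (HS : precubic S) by apply HX.
  exists (map inv T). simpl. split; [split|split].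
  - apply FinFun.Injective_map_NoDup; auto. intros a b; apply inv_inj.
  - intros x Hx. apply Enf_In. apply in_map_iff in Hx as [t [Ex Ht]]. eauto.
  - rewrite <- E, massoc, prodl_inv_cancel, one_l; auto.
    apply (comm_sub S); auto. intros x Hx. apply in_app_or in Hx as [Hx|Hx].
    apply inC_l; auto. apply in_map_iff in Hx as [t [Ex Ht]]; subst; apply inC_r; auto.
  - split; [split|split; auto].
    + apply HS.
    + intros x. rewrite Enf_In. split.
      * intros Hx. destruct (classic (In x T)) as [H|H].
        -- right. exists (inv x). rewrite inv_inv. split; auto. apply in_map; auto.
        -- left. split; auto. intros Hm. apply in_map_iff in Hm as [t [Ex Ht]]. subst.
           apply H. rewrite (invol S t HS); auto.
      * intros [[[[H1 H2]|[u [Hu Ex]]] H3]|[u [Hu Ex]]].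
        -- auto.
        -- exfalso. apply H3. subst. apply in_map; auto.
        -- apply in_map_iff in Hu as [t [Eu Ht]]. subst. rewrite inv_inv. auto.
    + intros x. split.
      * intros Hx. right. exists (inv x). rewrite inv_inv. split; [apply in_map; auto|split; auto].
      * intros [[[] _]|[u [Hu [_ Ex]]]]. apply in_map_iff in Hu as [t [Eu Ht]]. subst. rewrite inv_inv. auto.
Qed.

Lemma nf_nf A E1 E2 : same_set E1 E2 -> NoDup E2 -> ceq (Corner A E1 []) (Corner A E2 []).
Proof.
  intros Hs Hn. exists []. simpl. split; [split; [constructor|intros x []]|].
  split. rewrite one_l; auto. split. split; auto.
  intros x. rewrite <- (Hs x). split; auto. intros [[H _]|[u [[] _]]]; auto.
  split. constructor. intros x; split; [intros []|]. intros [[[] _]|[u [[] _]]].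
Qed.

Definition dir_rel A v d := exists s, cset v = [s] /\
  ((cpos v = [] /\ cbase v = A /\ d = s) \/ (cpos v = [s] /\ mul s (cbase v) = A /\ d = inv s)).

Lemma dir_fun A v d1 d2 : dir_rel A v d1 -> dir_rel A v d2 -> d1 = d2.
Proof.
  intros [s [E1 H1]] [t [E2 H2]]. rewrite E1 in E2. injection E2 as ->.
  destruct H1 as [[P1 [B1 ->]]|[P1 [B1 ->]]], H2 as [[P2 [B2 ->]]|[P2 [B2 ->]]]; auto;
  rewrite P1 in P2; discriminate.
Qed.

Lemma ceq_single v w : ceq v w -> forall s, cset v = [s] ->
  (cset w = [s] /\ cbase w = cbase v /\ (forall x, In x (cpos w) <-> In x (cpos v))) \/
  (cset w = [inv s] /\ cbase w = mul s (cbase v) /\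
     (forall x, In x (cpos w) <-> (In x (cpos v) /\ x <> s) \/ (~ In s (cpos v) /\ x = inv s))).
Proof.
  intros [U [HU [EB [[HN HF] [_ HP]]]]] s Es. rewrite Es in *.
  destruct HU as [HUn HUi]. destruct (subl_single U s HUn HUi) as [->| ->].
  - left. split; [|split].
    + apply nodup_single; auto. intros x. rewrite HF. simpl. split.
      intros [[[H|[]] _]|[u [[] _]]]; auto. intros ->; auto.
    + rewrite EB. apply one_l.
    + intros x. rewrite HP. split. intros [[H _]|[u [[] _]]]; auto. auto.
  - right. split; [|split].
    + apply nodup_single; auto. intros x. rewrite HF. simpl. split.
      intros [[[H|[]] H']|[u [[H|[]] E]]]; subst; auto. exfalso; auto.
      intros ->. right. exists s; auto.
    + rewrite EB. simpl. rewrite one_r; auto.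
    + intros x. rewrite HP. simpl. split.
      * intros [[H1 H2]|[u [[H|[]] [H1 E]]]].
        -- left. split; auto.
        -- right; subst; auto.
      * intros [[H1 H2]|[H1 E]]. left; split; auto. intros [H|[]]; auto.
        right. exists s; auto.
Qed.

Lemma dir_inv A v w d : dir_rel A v d -> ceq v w -> dir_rel A w d.
Proof.
  intros [s [Es H]] Hq.
  assert (Hn : NoDup (cpos w)) by (destruct Hq as [U [_ [_ [_ [Hn _]]]]]; exact Hn).
  destruct (ceq_single v w Hq s Es) as [[Ew [Bw Pw]]|[Ew [Bw Pw]]].
  - exists s. split; auto. destruct H as [[P [B ->]]|[P [B ->]]].
    + left. split; [|split]; auto. apply nil_of. intros x Hx. apply Pw in Hx. rewrite P in Hx; auto.
      rewrite Bw; auto.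
    + right. split; [|split]; auto. apply nodup_single; auto.
      intros x. rewrite Pw, P. simpl. split. intros [->|[]]; auto. auto.
      rewrite Bw; auto.
  - exists (inv s). split; auto. destruct H as [[P [B ->]]|[P [B ->]]].
    + right. split; [|split].
      * apply nodup_single; auto. intros x. rewrite Pw, P. simpl. split.
        intros [[[] _]|[_ E]]; auto. intros ->. right; auto.
      * rewrite Bw, B. apply inv_mul_l.
      * rewrite inv_inv; auto.
    + left. split; [|split]; auto.
      * apply nil_of. intros x Hx. apply Pw in Hx. rewrite P in Hx. simpl in Hx.
        destruct Hx as [[[H|[]] H2]|[H1 _]]; auto.
      * rewrite Bw; auto.
Qed.



Lemma ceq_mk0 v w s : cset v = [s] -> cset w = [s] -> cbase w = cbase v -> cpos w = cpos v ->
  NoDup (cpos v) -> ceq v w.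
Proof.
  intros Ev Ew Bw Pw Hn. exists []. split; [split; [constructor|intros x []]|].
  rewrite Ev, Ew, Pw, Bw. simpl. rewrite one_l. split; auto. split.
  - split. repeat constructor; auto. intros x. split; auto. intros [[H _]|[u [[] _]]]; auto.
  - split; auto. intros x. split; auto. intros [[H _]|[u [[] _]]]; auto.
Qed.

Lemma ceq_mk1 v w s : cset v = [s] -> cset w = [inv s] -> cbase w = mul s (cbase v) ->
  (cpos v = [] /\ cpos w = [inv s]) \/ (cpos v = [s] /\ cpos w = []) -> ceq v w.
Proof.
  intros Ev Ew Bw Hp. exists [s]. rewrite Ev, Ew, Bw. simpl. rewrite one_r.
  split; [split; [repeat constructor; auto|intros x Hx; auto]|]. split; auto. split.
  - split. repeat constructor; auto. intros x. simpl. split.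
    + intros [<-|[]]. right. exists s; auto.
    + intros [[H1 H2]|[u [[<-|[]] E]]]. contradiction. left; auto.
  - destruct Hp as [[P1 P2]|[P1 P2]]; rewrite P1, P2; simpl; split; try solve [repeat constructor; auto].
    + intros x; split. intros [<-|[]]. right. exists s; auto.
      intros [[[] _]|[u [[<-|[]] [_ E]]]]; auto.
    + intros x; split. intros []. intros [[H1 H2]|[u [[<-|[]] [H _]]]]; auto.
Qed.

Lemma dir_eq A v w d : dir_rel A v d -> dir_rel A w d -> ceq v w.
Proof.
  intros [s [Ev Hv]] [t [Ew Hw]].
  destruct Hv as [[Pv [Bv ->]]|[Pv [Bv ->]]], Hw as [[Pw [Bw E]]|[Pw [Bw E]]].
  - subst t. apply (ceq_mk0 _ _ s); auto. congruence. congruence. rewrite Pv; constructor.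
  - assert (t = inv s) by (rewrite E, inv_inv; auto). subst t.
    apply (ceq_mk1 _ _ s); auto. rewrite Bv, <- Bw, mul_inv_l. auto.
  - subst t. apply (ceq_mk1 _ _ s); auto. congruence.
  - apply inv_inj in E. subst t. apply (ceq_mk0 _ _ s); auto.
    apply (cancel_l s). congruence. congruence. rewrite Pv. repeat constructor; auto.
Qed.

Lemma face_exists c s : NoDup (cpos c) -> In s (cset c) -> exists f, face_corner mul one c [s] f.
Proof.
  intros Hn Hs.
  set (W := filter (fun x => dec (~ In x [s])) (cpos c)).
  set (Q := filter (fun x => dec (In x [s])) (cpos c)).
  exists (Corner (mul (pr W) (cbase c)) [s] Q). unfold face_corner; simpl.
  split; [split; [repeat constructor; auto|intros x [<-|[]]; auto]|].
  split; [repeat constructor; auto|]. split; [intros x; tauto|].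
  split; [apply NoDup_filter; auto|]. split.
  { intros x. unfold Q. rewrite filter_In, decP. simpl. tauto. }
  exists W. split; [apply NoDup_filter; auto|]. split; auto.
  intros x. unfold W. rewrite filter_In, decP. simpl. tauto.
Qed.

Lemma face_dir A c s f : cat A c -> In s (cset c) -> face_corner mul one c [s] f ->
  forall d, cdir (cpos c) s d -> dir_rel A f d.
Proof.
  destruct c as [B S T]. intros [HX [[HTn HTi] E]] Hs Hf. simpl in *.
  destruct Hf as [_ [Hn1 [Hs1 [Hn2 [Hp [W [HWn [HW EB]]]]]]]]. simpl in *.
  assert (HS : precubic S) by apply HX.
  assert (Ef : cset f = [s]).
  { apply nodup_single; auto. intros x. rewrite (Hs1 x). simpl. split. intros [->|[]]; auto. auto. }
  assert (HcT : comm_on T) by (apply (comm_sub S); auto; intros x Hx; apply inC_l; auto).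
  intros d [[HsT ->]|[HsT ->]]; exists s; split; auto.
  - right. split; [|split]; auto.
    + apply nodup_single; auto. intros x. rewrite Hp. simpl. split. intros [_ [->|[]]]; auto. intros ->; auto.
    + rewrite EB, massoc. rewrite <- E. f_equal. change (mul s (pr W)) with (pr (s :: W)).
      apply prodl_perm.
      * apply NoDup_Permutation; auto. constructor; auto. intros H. apply HW in H. simpl in H. tauto.
        intros x. simpl. rewrite HW. simpl. split. intros [<-|[H1 H2]]; auto.
        intros Hx. destruct (classic (s = x)); auto. right. split; auto. tauto.
      * apply (comm_on_incl T); auto. intros x [<-|Hx]; auto. apply HW in Hx; tauto.
  - left. split; [|split]; auto.
    + apply nil_of. intros x Hx. apply Hp in Hx. simpl in Hx. destruct Hx as [H1 [<-|[]]]; auto.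
    + rewrite EB, <- E. f_equal. apply prodl_perm.
      * apply NoDup_Permutation; auto. intros x. rewrite HW. simpl. split. tauto.
        intros Hx. split; auto. intros [<-|[]]; auto.
      * apply (comm_on_incl T); auto. intros x Hx; apply HW in Hx; tauto.
Qed.

Lemma cdir_ex T s : exists d, cdir T s d.
Proof. destruct (classic (In s T)); [exists (inv s); left|exists s; right]; auto. Qed.

Lemma cdir_fun T s d1 d2 : cdir T s d1 -> cdir T s d2 -> d1 = d2.
Proof. unfold cdir. intros [[? ->]|[? ->]] [[? ->]|[? ->]]; auto; contradiction. Qed.


Lemma face_cset c s f : face_corner mul one c [s] f -> cset f = [s].
Proof.
  intros [_ [Hn [Hs _]]]. apply nodup_single; auto. intros x. rewrite (Hs x). simpl.
  split. intros [->|[]]; auto. auto.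
Qed.

Lemma enf_mem A e w x : cat A e -> vertex_of mul one e w -> dir_rel A w x ->
  In x (Enf (cset e) (cpos e)).
Proof.
  intros He [a [Ha Hf]] Hd. destruct (cdir_ex (cpos e) a) as [d Hc].
  assert (x = d) by (apply (dir_fun A w); auto; apply (face_dir A e a); auto). subst d.
  apply Enf_cdir. apply He. eauto.
Qed.

Lemma cat_nodup A c : cat A c -> NoDup (cpos c).
Proof. intros [_ [[H _] _]]; auto. Qed.

Lemma XD_precubic B S : XD B S -> precubic S.
Proof. intros [[H _] _]; auto. Qed.

Lemma lv_dir A v : cat A v -> length (cset v) = 1 ->
  exists d, dir_rel A v d /\ glide d /\ D (mul d A).
Proof.
  destruct v as [B S P]. simpl. intros [HX [[HPn HPi] E]] Hl. simpl in *.
  destruct S as [|s [|s' S]]; try discriminate.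
  assert (Hg : glide s) by (apply (XD_precubic _ _ HX); simpl; auto).
  destruct HX as [_ HV].
  destruct (subl_single P s HPn HPi) as [->| ->]; simpl in E.
  - rewrite one_l in E. subst B. exists s. split; [|split]; auto.
    + exists s. simpl. auto.
    + specialize (HV [s]). simpl in HV. rewrite one_r in HV. apply HV.
      split; [repeat constructor; auto|intros x Hx; auto].
  - rewrite one_r in E. exists (inv s). split; [|split]; auto.
    + exists s. simpl. auto.
    + apply glide_inv; auto.
    + rewrite <- E, inv_mul_l. specialize (HV []). simpl in HV. rewrite one_l in HV. apply HV.
      split; [constructor|intros x []].
Qed.

Lemma collect {X Y : Type} (R : X -> Y -> Prop) (V : list X) :
  (forall v, In v V -> exists d, R v d) ->
  exists Sl, NoDup Sl /\ (forall x, In x Sl -> exists v, In v V /\ R v x) /\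
    (forall v, In v V -> exists x, In x Sl /\ R v x).
Proof.
  induction V as [|v V IH]; intros H.
  - exists []. repeat split; try constructor; intros ? [].
  - destruct IH as [Sl [Hn [H1 H2]]]. intros; apply H; simpl; auto.
    destruct (H v) as [d Hd]; simpl; auto.
    destruct (classic (In d Sl)) as [Hin|Hin].
    + exists Sl. split; auto. split.
      * intros x Hx. destruct (H1 x Hx) as [w [Hw Hr]]. exists w; simpl; auto.
      * intros w [<-|Hw]; eauto.
    + exists (d :: Sl). split; [constructor; auto|split].
      * intros x [<-|Hx]. exists v; simpl; auto. destruct (H1 x Hx) as [w [Hw Hr]]. exists w; simpl; auto.
      * intros w [<-|Hw]. exists d; simpl; auto. destruct (H2 w Hw) as [x [Hx Hr]]. exists x; simpl; auto.
Qed.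

Lemma cube_ind Sl A : cube_condition mul glide ind D -> precubic Sl -> D A ->
  (forall x, In x Sl -> D (mul x A)) ->
  (forall x y, In x Sl -> In y Sl -> x <> y -> D (mul x (mul y A))) ->
  forall T, subl T Sl -> D (mul (pr T) A).
Proof.
  intros Hcc HS HA H1 H2.
  assert (Hm : forall n T, length T <= n -> subl T Sl -> D (mul (pr T) A)).
  2: { intros T; apply (Hm (length T)); auto. }
  induction n as [|n IH]; intros T Hl [HTn HTi].
  - destruct T; [simpl; rewrite one_l; auto|simpl in Hl; inversion Hl].
  - destruct T as [|x [|y [|z R]]].
    + simpl; rewrite one_l; auto.
    + simpl. rewrite one_r. apply H1, HTi; simpl; auto.
    + simpl. rewrite one_r, <- massoc. apply H2; try (apply HTi; simpl; auto).
      intros ->. inversion HTn; subst. apply H3; simpl; auto.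
    + rewrite !prodl_cons_act.
      assert (Hsub : forall L, incl L (x :: y :: z :: R) -> NoDup L -> length L <= n -> D (mul (pr L) A)).
      { intros L Hi Hn Hln. apply IH; auto. split; auto. intros a Ha; apply HTi, Hi, Ha. }
      assert (Hxy : x <> y) by (intros ->; inversion HTn; subst; apply H3; simpl; auto).
      assert (Hxz : x <> z) by (intros ->; inversion HTn; subst; apply H3; simpl; auto).
      assert (Hyz : y <> z) by (intros ->; inversion HTn; subst; inversion H4; subst; apply H5; simpl; auto).
      inversion HTn as [|? ? Hx HTn1]; subst. inversion HTn1 as [|? ? Hy HTn2]; subst.
      inversion HTn2 as [|? ? Hz HRn]; subst.
      simpl in Hl.
      assert (Ix : In x Sl) by (apply HTi; simpl; auto).
      assert (Iy : In y Sl) by (apply HTi; simpl; auto).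
      assert (Iz : In z Sl) by (apply HTi; simpl; auto).
      destruct HS as [_ [Hg Hi]].
      apply Hcc; auto.
      * apply (Hsub R). intros a Ha; simpl; auto. auto. lia.
      * rewrite <- prodl_cons_act. apply (Hsub (x :: R)).
        intros a [<-|Ha]; simpl; auto. constructor; auto. intros H; apply Hx; simpl; auto. simpl; lia.
      * rewrite <- prodl_cons_act. apply (Hsub (y :: R)).
        intros a [<-|Ha]; simpl; auto. constructor; auto. intros H; apply Hy; simpl; auto. simpl; lia.
      * rewrite <- prodl_cons_act. apply (Hsub (z :: R)).
        intros a [<-|Ha]; simpl; auto. constructor; auto. simpl; lia.
      * rewrite <- !prodl_cons_act. apply (Hsub (x :: y :: R)).
        intros a [<-|[<-|Ha]]; simpl; auto.
        constructor. intros [H|H]; auto. apply Hx; simpl; auto. constructor; auto. intros H; apply Hy; simpl; auto.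
        simpl; lia.
      * rewrite <- !prodl_cons_act. apply (Hsub (x :: z :: R)).
        intros a [<-|[<-|Ha]]; simpl; auto.
        constructor. intros [H|H]; auto. apply Hx; simpl; auto. constructor; auto.
        simpl; lia.
      * rewrite <- !prodl_cons_act. apply (Hsub (y :: z :: R)).
        intros a [<-|[<-|Ha]]; simpl; auto.
        constructor. intros [H|H]; auto. apply Hy; simpl; auto. constructor; auto.
        simpl; lia.
Qed.


Local Notation lsimp := (link_simplex mul one glide ind D).
Local Notation vof := (vertex_of mul one).

Lemma simp1 A c s1 s2 v1 v2 : lsimp A c -> In s1 (cset c) -> In s2 (cset c) ->
  face_corner mul one c [s1] v1 -> face_corner mul one c [s2] v2 -> ceq v1 v2 -> s1 = s2.
Proof.
  intros [Hc _] H1 H2 F1 F2 Hq.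
  assert (E1 := face_cset _ _ _ F1). assert (E2 := face_cset _ _ _ F2).
  destruct (ceq_single v1 v2 Hq s1 E1) as [[E _]|[E _]]; rewrite E2 in E; injection E as E; auto.
  subst s2. symmetry. apply (invol (cset c)); auto. destruct Hc as [HX _]. apply (XD_precubic _ _ HX).
Qed.

Lemma vertex_sub A c1 c2 : lsimp A c1 -> lsimp A c2 ->
  (forall v, vof c1 v -> exists v', vof c2 v' /\ ceq v v') ->
  incl (Enf (cset c1) (cpos c1)) (Enf (cset c2) (cpos c2)).
Proof.
  intros [H1 _] [H2 _] Hv x Hx.
  apply Enf_cdir in Hx. 2: apply H1. destruct Hx as [s [Hs Hd]].
  destruct (face_exists c1 s) as [f Hf]; auto. apply (cat_nodup A); auto.
  assert (Hfd : dir_rel A f x) by (apply (face_dir A c1 s); auto).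
  destruct (Hv f) as [v' [Hv' Hq]]. exists s; auto.
  apply (enf_mem A c2 v'); auto. apply (dir_inv A f); auto.
Qed.

Lemma simp2 A c1 c2 : lsimp A c1 -> lsimp A c2 ->
  (forall v, vof c1 v -> exists v', vof c2 v' /\ ceq v v') ->
  (forall v, vof c2 v -> exists v', vof c1 v' /\ ceq v v') -> ceq c1 c2.
Proof.
  intros L1 L2 Ha Hb.
  assert (I1 := vertex_sub A c1 c2 L1 L2 Ha). assert (I2 := vertex_sub A c2 c1 L2 L1 Hb).
  destruct L1 as [C1 _], L2 as [C2 _].
  assert (HP1 : precubic (cset c1)) by (apply (XD_precubic (cbase c1)), C1).
  assert (HI1 : incl (cpos c1) (cset c1)) by apply C1.
  assert (N2 : NoDup (Enf (cset c2) (cpos c2))) by (apply (XD_precubic A), nf_XD, C2).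
  apply (Trans c1 (Corner A (Enf (cset c2) (cpos c2)) [])); auto.
  - apply (Trans c1 (Corner A (Enf (cset c1) (cpos c1)) [])); auto.
    apply c_to_nf; auto. apply nf_nf; auto. intros x; split; auto.
  - apply nf_to_c; auto.
Qed.

Lemma flag_back A : regular mul one glide ind D -> cube_condition mul glide ind D -> D A ->
  link_flag mul one inv glide ind D A.
Proof.
  intros Hreg Hcc HA V HV Hlv Hpair.
  destruct (collect (dir_rel A) V) as [Sl [HSn [HS1 HS2]]].
  { intros v Hv. destruct (lv_dir A v) as [d [Hd _]]; try apply Hlv; eauto. }
  assert (Hx1 : forall x, In x Sl -> glide x /\ D (mul x A)).
  { intros x Hx. destruct (HS1 x Hx) as [v [Hv Hd]].
    destruct (lv_dir A v) as [d [Hd' [Hg HD]]]; try apply Hlv; auto.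
    rewrite (dir_fun A v x d); auto. }
  assert (Hx2 : forall x y, In x Sl -> In y Sl -> x <> y -> ind x y /\ D (mul x (mul y A))).
  { intros x y Hx Hy Hxy.
    destruct (HS1 x Hx) as [v1 [Hv1 Hd1]]. destruct (HS1 y Hy) as [v2 [Hv2 Hd2]].
    destruct (Hpair v1 v2 Hv1 Hv2) as [e [w1 [w2 [He [Hl [Hw1 [Hw2 [Hq1 Hq2]]]]]]]].
    { intros Hq. apply Hxy. apply (dir_fun A v2); auto. apply (dir_inv A v1); auto. }
    assert (M1 : In x (Enf (cset e) (cpos e))) by (apply (enf_mem A e w1); try apply He; auto; apply (dir_inv A v1); auto).
    assert (M2 : In y (Enf (cset e) (cpos e))) by (apply (enf_mem A e w2); try apply He; auto; apply (dir_inv A v2); auto).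
    assert (HX := nf_XD A e (proj1 He)).
    split. apply (XD_precubic _ _ HX); auto.
    destruct HX as [_ HV']. specialize (HV' [x; y]). simpl in HV'. rewrite one_r, <- massoc in HV'.
    apply HV'. split. constructor. intros [H|[]]; auto. repeat constructor; auto.
    intros a [<-|[<-|[]]]; auto. }
  assert (HP : precubic Sl).
  { split; auto. split. intros x Hx; apply Hx1; auto. intros x y Hx Hy Hxy; apply Hx2; auto. }
  assert (HXS : in_XD mul one glide ind D A Sl).
  { split. apply (Hreg A HA Sl HP). intros x Hx; apply Hx1; auto. intros x y Hx Hy Hxy; apply Hx2; auto.
    apply (cube_ind Sl A); auto. intros x Hx; apply Hx1; auto. intros x y Hx Hy Hxy; apply Hx2; auto. }
  assert (Hcat : cat A (Corner A Sl [])).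
  { split; auto. split. split; [constructor|intros x []]. simpl. apply one_l. }
  exists (Corner A Sl []). split; [|split].
  - split; auto. simpl. destruct V as [|v V]; [contradiction|].
    destruct (HS2 v) as [x [Hx _]]; simpl; auto. destruct Sl; [contradiction|discriminate].
  - intros v Hv. destruct (HS2 v Hv) as [x [Hx Hd]].
    destruct (face_exists (Corner A Sl []) x) as [f Hf]; simpl; auto. constructor.
    exists f. split. exists x; auto.
    apply (dir_eq A v f x); auto. apply (face_dir A (Corner A Sl []) x f); auto. right; simpl; auto.
  - intros w [s [Hs Hf]]. simpl in Hs. destruct (HS1 s Hs) as [v [Hv Hd]].
    exists v. split; auto. apply (dir_eq A v w s); auto. apply (face_dir A (Corner A Sl []) s w); auto. right; simpl; auto.
Qed.


Lemma cancel_r a x y : mul x a = mul y a -> x = y.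
Proof.
  intros H. rewrite <- (one_r x), <- (one_r y), <- (inv_r a), !massoc, H. auto.
Qed.

Lemma subl_pair (T : list G) s t : subl T [s; t] ->
  T = [] \/ T = [s] \/ T = [t] \/ T = [s; t] \/ T = [t; s].
Proof.
  intros [Hn Hi].
  assert (Hm : forall x, In x T -> x = s \/ x = t) by (intros x Hx; apply Hi in Hx; simpl in Hx; intuition).
  destruct T as [|a [|b [|c T]]]; auto.
  - destruct (Hm a) as [->| ->]; simpl; auto.
  - inversion Hn; subst. assert (a <> b) by (intros ->; apply H1; simpl; auto).
    destruct (Hm a) as [->| ->], (Hm b) as [->| ->]; simpl; auto; try contradiction.
  - exfalso. inversion Hn as [|? ? H1 Hn1]; subst. inversion Hn1 as [|? ? H2 _]; subst.
    destruct (Hm a) as [->| ->], (Hm b) as [->| ->], (Hm c) as [->| ->]; simpl; auto;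
    try (apply H1; simpl; auto; fail); try (apply H2; simpl; auto; fail).
Qed.

Lemma XD_single A s : glide s -> D A -> D (mul s A) -> XD A [s].
Proof.
  intros Hg HA Hs. assert (Hs1 := glide_ne1 s Hg).
  split; [split|].
  - split; [repeat constructor; auto|split]. intros x [<-|[]]; auto.
    intros x y [<-|[]] [<-|[]] H; contradiction.
  - intros T1 T2 H1 H2 E.
    destruct H1 as [Hn1 Hi1], H2 as [Hn2 Hi2].
    destruct (subl_single T1 s Hn1 Hi1) as [->| ->], (subl_single T2 s Hn2 Hi2) as [->| ->];
      simpl in E; rewrite ?one_r in E; try (intros x; tauto); congruence.
  - intros T [Hn Hi]. destruct (subl_single T s Hn Hi) as [->| ->]; simpl; rewrite ?one_l, ?one_r; auto.
Qed.

Lemma XD_pair A s t : s <> t -> glide s -> glide t -> ind s t -> D A -> D (mul s A) -> D (mul t A) ->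
  D (mul s (mul t A)) -> XD A [s; t].
Proof.
  intros Hst Hgs Hgt Hi HA Hs Ht Hst'.
  assert (Hs1 := glide_ne1 s Hgs). assert (Ht1 := glide_ne1 t Hgt).
  assert (Hc := ind_comm s t Hi). assert (Hn1 := ind_ne1 s t Hi).
  assert (N1 : mul s t <> s) by (intros E; apply Ht1; apply (cancel_l s); rewrite one_r; auto).
  assert (N2 : mul s t <> t) by (intros E; apply Hs1; apply (cancel_r t); rewrite one_l; auto).
  split; [split|].
  - split; [repeat constructor; auto|split].
    + intros [->|[]]; auto.
    + intros x [<-|[<-|[]]]; auto.
    + intros x y [<-|[<-|[]]] [<-|[<-|[]]] H; try contradiction; auto. apply ind_sym; auto.
  - intros T1 T2 H1 H2 E.
    destruct (subl_pair T1 s t H1) as [->|[->|[->|[->| ->]]]],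
             (subl_pair T2 s t H2) as [->|[->|[->|[->| ->]]]];
      simpl in E; rewrite ?one_r in E; try (intros x; simpl; tauto); try congruence.
  - intros T HT. destruct (subl_pair T s t HT) as [->|[->|[->|[->| ->]]]]; simpl; rewrite ?one_l, ?one_r; auto;
      rewrite <- massoc; auto. rewrite massoc, <- Hc, <- massoc; auto.
Qed.

Local Notation NPC := (nonpositively_curved mul one inv glide ind D).

Lemma key_fwd A S : NPC -> D A -> precubic S -> S <> [] -> (forall s, In s S -> D (mul s A)) ->
  (forall s t, In s S -> In t S -> s <> t -> D (mul s (mul t A))) -> XD A S.
Proof.
  intros Hnpc HA HS Hne H1 H2.
  destruct (Hnpc A HA) as [_ Hflag].
  set (vx := fun s => Corner A [s] []).
  assert (Hvd : forall s, dir_rel A (vx s) s) by (intros s; exists s; simpl; auto).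
  assert (Hcat1 : forall s, In s S -> cat A (vx s)).
  { intros s Hs. split. apply XD_single; auto. apply HS; auto. split. split; [constructor|intros x []].
    simpl. apply one_l. }
  destruct (Hflag (map vx S)) as [c [Hc [Hc1 Hc2]]].
  - destruct S; [contradiction|discriminate].
  - intros v Hv. apply in_map_iff in Hv as [s [<- Hs]]. split; auto.
  - intros v1 v2 Hv1 Hv2 Hq.
    apply in_map_iff in Hv1 as [s [<- Hs]]. apply in_map_iff in Hv2 as [t [<- Ht]].
    assert (Hst : s <> t) by (intros ->; apply Hq; apply (dir_eq A _ _ t); auto).
    assert (HXe : XD A [s; t]).
    { apply XD_pair; auto; try apply HS; auto. }
    set (e := Corner A [s; t] []).
    assert (Hce : cat A e). { split; auto. split. split; [constructor|intros x []]. simpl. apply one_l. }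
    destruct (face_exists e s) as [w1 Hw1]. constructor. simpl; auto.
    destruct (face_exists e t) as [w2 Hw2]. constructor. simpl; auto.
    exists e, w1, w2. split; [split; auto; discriminate|]. split; auto.
    split. exists s; simpl; auto. split. exists t; simpl; auto.
    split; apply (dir_eq A _ _ _ (Hvd _)).
    + apply (face_dir A e s w1); simpl; auto. right; auto.
    + apply (face_dir A e t w2); simpl; auto. right; auto.
  - destruct Hc as [Hc _].
    assert (HE : same_set S (Enf (cset c) (cpos c))).
    { intros x. split.
      - intros Hx. destruct (Hc1 (vx x)) as [w [Hw Hq]]. apply in_map; auto.
        apply (enf_mem A c w); auto. apply (dir_inv A (vx x)); auto.
      - intros Hx. apply Enf_cdir in Hx; [|apply Hc]. destruct Hx as [s [Hs Hd]].
        destruct (face_exists c s) as [f Hf]; auto. apply (cat_nodup A); auto.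
        destruct (Hc2 f) as [v [Hv Hq]]. exists s; auto.
        apply in_map_iff in Hv as [y [<- Hy]].
        assert (y = x). { apply (dir_fun A f). apply (dir_inv A (vx y)); auto. apply (face_dir A c s f); auto. }
        subst; auto. }
    assert (HX := nf_XD A c Hc). destruct HX as [[_ HC] HV].
    assert (Hsub : forall T, subl T S -> subl T (Enf (cset c) (cpos c))).
    { intros T [Hn Hi]. split; auto. intros x Hx. apply HE, Hi, Hx. }
    split. split. exact HS. intros T1 T2 Ht1 Ht2 E. apply HC; auto.
    intros T HT. apply HV; auto.
Qed.


Lemma swapD s t A : ind s t -> D (mul s (mul t A)) -> D (mul t (mul s A)).
Proof. intros Hi H. rewrite massoc, <- (ind_comm s t Hi), <- massoc; auto. Qed.

Lemma main_iff : NPC <-> (regular mul one glide ind D /\ cube_condition mul glide ind D).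
Proof.
  split.
  - intros Hnpc. split.
    + intros A HA S HS H1 H2. destruct S as [|a S'].
      * split; auto. intros T1 T2 [_ Hi1] [_ Hi2] _.
        rewrite (nil_of T1), (nil_of T2); try (intros x; split; auto).
        intros x Hx; apply (Hi2 x Hx). intros x Hx; apply (Hi1 x Hx).
      * apply (key_fwd A); auto. discriminate.
    + intros A s1 s2 s3 HA g1 g2 g3 i12 i13 i23 D1 D2 D3 D12 D13 D23.
      assert (n12 := ind_neq _ _ i12). assert (n13 := ind_neq _ _ i13). assert (n23 := ind_neq _ _ i23).
      assert (HS : precubic [s1; s2; s3]).
      { split; [|split].
        - constructor. intros [H|[H|[]]]; auto. constructor. intros [H|[]]; auto.
          repeat constructor; auto.
        - intros x [<-|[<-|[<-|[]]]]; auto.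
        - intros x y [<-|[<-|[<-|[]]]] [<-|[<-|[<-|[]]]] H; try contradiction; auto using ind_sym. }
      assert (HX : XD A [s1; s2; s3]).
      { apply (key_fwd A); auto. discriminate.
        - intros x [<-|[<-|[<-|[]]]]; auto.
        - intros x y [<-|[<-|[<-|[]]]] [<-|[<-|[<-|[]]]] H; try contradiction; auto using swapD. }
      destruct HX as [_ HV]. specialize (HV [s1; s2; s3]). simpl in HV. rewrite one_r, <- !massoc in HV.
      apply HV. split. apply HS. intros x Hx; auto.
  - intros [Hreg Hcc] A HA. split; [split|].
    + intros c s1 s2 v1 v2. apply simp1.
    + intros c1 c2. apply simp2.
    + apply flag_back; auto.
Qed.

End G.

Theorem theorem4p4 (G : Type) (mul : G -> G -> G) (one : G) (inv : G -> G)
  (HG : is_group mul one inv)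
  (glide : G -> Prop) (ind : G -> G -> Prop)
  (HGS : gliding_system mul one inv glide ind)
  (D : G -> Prop) :
  nonpositively_curved mul one inv glide ind D <->
  (regular mul one glide ind D /\ cube_condition mul glide ind D).
Proof. apply main_iff; auto. Qed.
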